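(* Let $(X,d)$ be a metric space and let $\tilde x=(x_n)$, $\tilde y=(y_n)$ be statistically equivalent sequences of points of $X$. Let $K\subseteq\mathbb N$ be an infinite set with $\liminf_{n\to\infty}\frac{|K(n)|}{n}>0$, where $K(n)=\{k\in K: k\le n\}$, and let $\tilde x'=(x_{n(k)})$ and $\tilde y'=(y_{n(k)})$ be the subsequences of $\tilde x$ and $\tilde y$ with $\{n(k):k\in\mathbb N\}=K$ ($(n(k))$ strictly increasing). Then $\tilde x'$ and $\tilde y'$ are statistically equivalent.
   Context: A set $M\subseteq\mathbb N$ is statistical dense if $\lim_{n\to\infty}|\{m\in M:m\le n\}|/n=1$. Sequences $(u_k),(v_k)$ are statistically equivalent if there is a statistical dense $M\subseteq\mathbb N$ with $u_k=v_k$ for all $k\in M$; subsequences $(x_{n(k)})_k$ are regarded as sequences indexed by $k$. *)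

(* Defs.v *)
From Stdlib Require Import Reals List.
From Coquelicot Require Import Coquelicot.
Open Scope R_scope.

(* Subsets of N are represented by their (boolean) characteristic functions.
   N is identified with nat (0-based). *)

Definition count_upto (M : nat -> bool) (n : nat) : nat :=
  length (filter M (seq 0 n)).

Definition density_seq (M : nat -> bool) (n : nat) : R :=
  INR (count_upto M n) / INR n.

Definition stat_dense (M : nat -> bool) : Prop :=
  is_lim_seq (density_seq M) 1.

Definition stat_equiv {X : Type} (u v : nat -> X) : Prop :=
  exists M : nat -> bool, stat_dense M /\ (forall k, M k = true -> u k = v k).

Definition is_metric {X : Type} (d : X -> X -> R) : Prop :=
  (forall x y, d x y = 0 <-> x = y) /\
  (forall x y, d x y = d y x) /\
  (forall x y z, d x z <= d x y + d y z).

(* Main.v *)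
Require Import Defs.
From Stdlib Require Import Reals List Lia Lra Arith.
From Coquelicot Require Import Coquelicot.
Open Scope R_scope.

Lemma cu_S (M : nat -> bool) n :
  count_upto M (S n) = (count_upto M n + (if M n then 1 else 0))%nat.
Proof.
  unfold count_upto. rewrite seq_S, filter_app, length_app. simpl.
  destruct (M n); simpl; lia.
Qed.

Lemma cu_ext (P Q : nat -> bool) n : (forall m, P m = Q m) ->
  count_upto P n = count_upto Q n.
Proof. intro H; induction n; [reflexivity|]. rewrite !cu_S, IHn, H; reflexivity. Qed.

Lemma cu_le (P Q : nat -> bool) n : (forall m, P m = true -> Q m = true) ->
  (count_upto P n <= count_upto Q n)%nat.
Proof. intro H; induction n; [apply Nat.le_refl|]. rewrite !cu_S.
  destruct (P n) eqn:E; [rewrite (H _ E); lia|]. destruct (Q n); lia. Qed.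

Lemma cu_compl (M : nat -> bool) n :
  (count_upto M n + count_upto (fun m => negb (M m)) n = n)%nat.
Proof. induction n; [reflexivity|]. rewrite !cu_S. destruct (M n); simpl; lia. Qed.

Lemma cu_zero (Q : nat -> bool) b : (forall m, (m < b)%nat -> Q m = false) ->
  count_upto Q b = 0%nat.
Proof. induction b; intro H; [reflexivity|]. rewrite cu_S, H, IHb; [lia| |lia].
  intros; apply H; lia. Qed.

Lemma cu_gap (Q : nat -> bool) a b : (a < b)%nat ->
  (forall m, (a < m < b)%nat -> Q m = false) ->
  count_upto Q b = (count_upto Q a + (if Q a then 1 else 0))%nat.
Proof.
  intros Hab H. induction b; [lia|].
  destruct (Nat.eq_dec a b) as [->|Hne]; [apply cu_S|].
  rewrite cu_S, IHb, (H b); [lia|lia|lia|]. intros; apply H; lia.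
Qed.

Theorem lemma4 (X : Type) (d : X -> X -> R) (Hd : is_metric d)
  (x y : nat -> X) (Hxy : stat_equiv x y)
  (K : nat -> bool)
  (HKinf : forall N : nat, exists k : nat, (N <= k)%nat /\ K k = true)
  (HKdens : Rbar_lt 0 (LimInf_seq (density_seq K)))
  (nk : nat -> nat)
  (Hinc : forall k : nat, (nk k < nk (S k))%nat)
  (Hrange : forall m : nat, K m = true <-> exists k : nat, nk k = m) :
  stat_equiv (fun k => x (nk k)) (fun k => y (nk k)).
Proof.
  destruct Hxy as [M [HM HMe]].
  assert (Hmono : forall k n, (k <= n)%nat -> (nk k <= nk n)%nat).
  { intros k n Hkn; induction Hkn; [lia|]. specialize (Hinc m); lia. }
  assert (Hsmono : forall k n, (k < n)%nat -> (nk k < nk n)%nat).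
  { intros k n Hkn. specialize (Hinc k). specialize (Hmono (S k) n Hkn). lia. }
  assert (Hge : forall n, (n <= nk n)%nat).
  { induction n; [lia|]. specialize (Hinc n); lia. }
  assert (Htr : forall P : nat -> bool, forall n,
    count_upto (fun k => P (nk k)) n = count_upto (fun m => andb (K m) (P m)) (nk n)).
  { intros P n. induction n.
    - simpl. symmetry. apply cu_zero. intros m Hm.
      destruct (K m) eqn:E; [|reflexivity].
      apply Hrange in E as [k Hk]. specialize (Hmono 0%nat k ltac:(lia)). lia.
    - rewrite cu_S, IHn. rewrite (cu_gap _ (nk n) (nk (S n)) (Hinc n)).
      + assert (K (nk n) = true) by (apply Hrange; eauto). rewrite H. reflexivity.
      + intros m Hm. destruct (K m) eqn:E; [|reflexivity].
        apply Hrange in E as [k Hk]. subst m.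
        destruct (le_lt_dec k n) as [Hk|Hk].
        * specialize (Hmono _ _ Hk); lia.
        * specialize (Hmono (S n) k Hk); lia. }
  assert (HKn : forall n, count_upto K (nk n) = n).
  { intro n. transitivity (count_upto (fun k => true) n).
    - rewrite (Htr (fun _ => true)). apply cu_ext. intro; symmetry; apply Bool.andb_true_r.
    - induction n; [reflexivity|]. rewrite cu_S, IHn; lia. }
  assert (Hc : forall n, (count_upto (fun k => negb (M (nk k))) n <=
                          count_upto (fun m => negb (M m)) (nk n))%nat).
  { intro n. rewrite (Htr (fun m => negb (M m))). apply cu_le.
    intros m Hm. apply Bool.andb_true_iff in Hm; tauto. }
  exists (fun k => M (nk k)). split; [|intros k Hk; apply HMe; exact Hk].
  destruct (ex_LimInf_seq (density_seq K)) as [l Hl].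
  rewrite (is_LimInf_seq_unique _ _ Hl) in HKdens.
  assert (Hdel : exists delta, 0 < delta /\ exists N0, forall N, (N0 <= N)%nat ->
            delta <= density_seq K N).
  { destruct l as [l| |]; simpl in HKdens, Hl.
    - assert (Hp : 0 < l / 2) by lra.
      destruct (Hl (mkposreal _ Hp)) as [_ [N0 HN0]]. exists (l/2). split; [lra|].
      exists N0. intros N HN. specialize (HN0 N HN). simpl in HN0. lra.
    - destruct (Hl 1) as [N0 HN0]. exists 1. split; [lra|]. exists N0.
      intros N HN. specialize (HN0 N HN). lra.
    - contradiction. }
  destruct Hdel as [delta [Hdpos [N0 HN0]]].
  apply is_lim_seq_spec. apply is_lim_seq_spec in HM.
  intros eps.
  assert (Hp : 0 < eps * delta) by (pose proof (cond_pos eps); nra).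
  destruct (HM (mkposreal _ Hp)) as [N1 HN1]. simpl in HN1.
  exists (S (N0 + N1)). intros n Hn.
  set (N := nk n).
  assert (HN : (S (N0 + N1) <= N)%nat) by (specialize (Hge n); unfold N; lia).
  pose proof (HN0 N ltac:(lia)) as HK. pose proof (HN1 N ltac:(lia)) as HMN.
  unfold density_seq in HK, HMN |- *.
  assert (EK : count_upto K N = n) by apply HKn. rewrite EK in HK.
  pose proof (cu_compl M N) as C1. pose proof (cu_compl (fun k => M (nk k)) n) as C2.
  pose proof (Hc n) as C3. fold N in C3.
  set (a := count_upto M N) in *.
  set (b := count_upto (fun m => negb (M m)) N) in *.
  set (a' := count_upto (fun k => M (nk k)) n) in *.
  set (b' := count_upto (fun k => negb (M (nk k))) n) in *.
  assert (Ra : INR a + INR b = INR N) by (rewrite <- plus_INR; f_equal; lia).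
  assert (Ra' : INR a' + INR b' = INR n) by (rewrite <- plus_INR; f_equal; lia).
  assert (Rb : INR b' <= INR b) by (apply le_INR; lia).
  assert (HNpos : 0 < INR N) by (apply lt_0_INR; lia).
  assert (Hnpos : 0 < INR n) by (apply lt_0_INR; lia).
  pose proof (cond_pos eps) as Hepos.
  assert (HK' : delta * INR N <= INR n).
  { assert (INR n = INR n / INR N * INR N) by (field; lra). nra. }
  assert (HMN' : INR b < eps * delta * INR N).
  { apply Rabs_def2 in HMN as [_ HMN].
    assert (INR a = INR a / INR N * INR N) by (field; lra). nra. }
  assert (Hb' : INR b' < eps * INR n) by nra.
  assert (Eq : INR a' / INR n - 1 = - (INR b' / INR n)) by (replace (INR a') with (INR n - INR b') by lra; field; lra).
  rewrite Eq, Rabs_Ropp. pose proof (pos_INR b').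
  rewrite Rabs_right.
  - apply (Rmult_lt_reg_r (INR n)); [lra|]. field_simplify; lra.
  - apply Rle_ge, Rdiv_le_0_compat; lra.
Qed.
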